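(* Let $F$ be a Hecke--Maa\ss{} cusp form for $\mathrm{SL}_3(\mathbb{Z})$ with Hecke eigenvalues $A_F(m,n)$, and let $\Xi_F$ be as defined below and, for $c\in\mathbb{N}$, $d\in(\mathbb{Z}/c\mathbb{Z})^\times$, $\Re(w)<0$, \[\Xi(c,\pm d;-w) \coloneqq c^{-w} \sum_{b \in \mathbb{Z}/c\mathbb{Z}} e\Big(\pm \frac{bd}{c}\Big) \sum_{m = 1}^{\infty} \frac{e(\frac{bm}{c})}{m^{1 - w}}.\] For $\ell\in\mathbb{N}$, $w_1=u_1+iv_1$, $w_2=u_2+iv_2$ with $u_1,u_2<0$, and any signs $\pm_1,\pm_2$, \[\sum_{c \mid \ell} c^{2w_2 - 1} \sum_{d \in (\mathbb{Z}/c\mathbb{Z})^{\times}} \Xi(c,\pm_1 d;-w_1) \Xi_F\Big(c,\pm_2 d,\frac{\ell}{c};-w_2\Big) = \ell^{1 - w_1 - w_2} \sum_{n_1 \mid \ell} \sum_{m,n_2 = 1}^{\infty} \frac{A_F(n_2,n_1)}{m^{1 - w_1} n_2^{1 - w_2} n_1^{1 - 2w_2}} S\Big(m, \mp_1 \pm_2 n_2; \frac{\ell}{n_1}\Big).\]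
   Context: $e(x)=e^{2\pi ix}$, $S(m,n;c)$ is the Kloosterman sum. For $c,\ell\in\mathbb{N}$, $d\in(\mathbb{Z}/c\mathbb{Z})^\times$, $\Re(w)<0$: $\Xi_F(c,\pm d,\ell;-w) \coloneqq c \sum_{n_1 \mid c\ell} \sum_{n_2 \ge1} \frac{A_F(n_2,n_1)}{n_2 n_1} S(d\ell,\pm n_2; \frac{c\ell}{n_1}) (\frac{n_2 n_1^2}{c^3 \ell})^w$. The sign $\mp_1\pm_2$ denotes the product of $-(\pm_1 1)$ and $(\pm_2 1)$. *)

(* Defs.v *)
From Stdlib Require Import Reals ZArith List Arith Bool.
From Coquelicot Require Import Coquelicot.
Open Scope R_scope.

Definition csum {T : Type} (l : list T) (f : T -> C) : C :=
  fold_right (fun a acc => Cplus (f a) acc) (RtoC 0) l.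

Definition divisors (n : nat) : list nat :=
  filter (fun d => Nat.eqb (n mod d) 0) (seq 1 n).

(** Representatives 0..c-1 of the units of Z/cZ (for c = 1: [0]). *)
Definition units_mod (c : nat) : list nat :=
  filter (fun x => Nat.eqb (Nat.gcd x c) 1) (seq 0 c).

Definition e (x : R) : C := (cos (2 * PI * x), sin (2 * PI * x)).

Definition cpow (x : R) (w : C) : C :=
  let t := ln x in (exp (Re w * t) * cos (Im w * t), exp (Re w * t) * sin (Im w * t)).

Definition CSeries (a : nat -> C) : C :=
  (Series (fun n => Re (a n)), Series (fun n => Im (a n))).

(** Kloosterman sum S(m,n;c) = sum_{x mod c, (x,c)=1} e((m x + n xbar)/c). *)
Definition Kloosterman (m n : Z) (c : nat) : C :=
  csum (units_mod c) (fun x =>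
    csum (filter (fun y => Nat.eqb ((x * y) mod c) (1 mod c)) (seq 0 c)) (fun y =>
      e (IZR (m * Z.of_nat x + n * Z.of_nat y) / INR c))).

Definition sgn (b : bool) : Z := if b then 1%Z else (-1)%Z.

(** Xi c k w  represents  Xi(c, k; -w)
    = c^{-w} sum_{b mod c} e(b k / c) sum_{m>=1} e(b m / c) / m^{1-w}. *)
Definition Xi (c : nat) (k : Z) (w : C) : C :=
  Cmult (cpow (INR c) (Copp w))
    (csum (seq 0 c) (fun b =>
       Cmult (e (IZR (Z.of_nat b * k) / INR c))
         (CSeries (fun j => let m := S j in
            Cdiv (e (INR (b * m) / INR c)) (cpow (INR m) (Cminus (RtoC 1) w)))))).

(** XiF A c sg d l w represents  Xi_F(c, sg d, l; -w)
    = c sum_{n1 | c l} sum_{n2>=1} A(n2,n1)/(n2 n1) S(d l, sg n2; c l / n1)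
        (n2 n1^2 / (c^3 l))^w. *)
Definition XiF (A : nat -> nat -> C) (c : nat) (sg d : Z) (l : nat) (w : C) : C :=
  Cmult (RtoC (INR c))
    (csum (divisors (c * l)) (fun n1 =>
       CSeries (fun j => let n2 := S j in
         Cmult (Cmult (Cdiv (A n2 n1) (RtoC (INR n2 * INR n1)))
                      (Kloosterman (d * Z.of_nat l) (sg * Z.of_nat n2) ((c * l) / n1)))
               (cpow (INR n2 * INR n1 ^ 2 / (INR c ^ 3 * INR l)) w)))).

(** Properties of the normalized Fourier/Hecke coefficients A_F(m1,m2) of a
    Hecke--Maass cusp form F for SL_3(Z) (Goldfeld, "Automorphic forms and
    L-functions for GL(n,R)", Thm 6.4.11, Prop 9.?, Rankin--Selberg bound). *)
Definition hecke_sum (n : nat) (P : nat -> nat -> nat -> C) : C :=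
  csum (divisors n) (fun d0 =>
    csum (divisors (n / d0)%nat) (fun d1 => P d0 d1 (n / (d0 * d1))%nat)).

Record HeckeMaassCoeffs (A : nat -> nat -> C) : Prop := {
  hm_one : A 1%nat 1%nat = RtoC 1;
  hm_mult : forall m1 m2 m1' m2' : nat,
    (1 <= m1)%nat -> (1 <= m2)%nat -> (1 <= m1')%nat -> (1 <= m2')%nat ->
    Nat.gcd (m1 * m2) (m1' * m2') = 1%nat ->
    A (m1 * m1')%nat (m2 * m2')%nat = Cmult (A m1 m2) (A m1' m2');
  hm_hecke1 : forall n m1 m2 : nat,
    (1 <= n)%nat -> (1 <= m1)%nat -> (1 <= m2)%nat ->
    Cmult (A n 1%nat) (A m1 m2) =
    hecke_sum n (fun d0 d1 d2 =>
      if Nat.eqb (m1 mod d1) 0 && Nat.eqb (m2 mod d2) 0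
      then A (m1 * d0 / d1)%nat (m2 * d1 / d2)%nat else RtoC 0);
  hm_hecke2 : forall n m1 m2 : nat,
    (1 <= n)%nat -> (1 <= m1)%nat -> (1 <= m2)%nat ->
    Cmult (A 1%nat n) (A m1 m2) =
    hecke_sum n (fun d0 d1 d2 =>
      if Nat.eqb (m1 mod d1) 0 && Nat.eqb (m2 mod d2) 0
      then A (m1 * d2 / d1)%nat (m2 * d0 / d2)%nat else RtoC 0);
  hm_dual : forall m1 m2 : nat, A m2 m1 = Cconj (A m1 m2);
  hm_rankin_selberg : exists K : R, forall X : nat,
    fold_right Rplus 0 (map (fun m1 => fold_right Rplus 0 (map (fun m2 =>
      if Nat.leb (m1 * m1 * m2) X then Cmod (A m1 m2) ^ 2 else 0)
      (seq 1 X))) (seq 1 X)) <= K * INR X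
}.

(* Main.v *)
Require Import Defs.
From Stdlib Require Import Reals ZArith List Arith Bool.
From Coquelicot Require Import Coquelicot.
From Stdlib Require Import Lia Lra Permutation.
Open Scope R_scope.


Lemma csum_nil {T} (f : T -> C) : csum nil f = RtoC 0.
Proof. reflexivity. Qed.
Lemma csum_cons {T} (a : T) l f : csum (a :: l) f = Cplus (f a) (csum l f).
Proof. reflexivity. Qed.
Lemma csum_app {T} (l1 l2 : list T) f : csum (l1 ++ l2) f = Cplus (csum l1 f) (csum l2 f).
Proof. induction l1. - rewrite app_nil_l, csum_nil; ring.
  - rewrite <- app_comm_cons, !csum_cons. rewrite IHl1. now rewrite Cplus_assoc. Qed.
Lemma csum_ext {T} (l : list T) f g : (forall x, In x l -> f x = g x) -> csum l f = csum l g.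
Proof. induction l; intros H. reflexivity. rewrite !csum_cons. rewrite H by (left; auto).
  rewrite IHl; auto. intros; apply H; right; auto. Qed.
Lemma csum_plus {T} (l : list T) f g : csum l (fun x => Cplus (f x) (g x)) = Cplus (csum l f) (csum l g).
Proof. induction l. rewrite !csum_nil; ring.
  rewrite !csum_cons, IHl. ring. Qed.
Lemma csum_scal_l {T} (l : list T) k f : csum l (fun x => Cmult k (f x)) = Cmult k (csum l f).
Proof. induction l. rewrite !csum_nil; ring.
  rewrite !csum_cons, IHl. ring. Qed.
Lemma csum_scal_r {T} (l : list T) k f : csum l (fun x => Cmult (f x) k) = Cmult (csum l f) k.
Proof. induction l. rewrite !csum_nil; ring.
  rewrite !csum_cons, IHl. ring. Qed.
Lemma csum_zero {T} (l : list T) : csum l (fun _ => RtoC 0) = RtoC 0.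
Proof. induction l. reflexivity. rewrite csum_cons, IHl. ring. Qed.
Lemma csum_filter {T} (P : T -> bool) l f :
  csum (filter P l) f = csum l (fun x => if P x then f x else RtoC 0).
Proof. induction l. reflexivity. simpl filter. rewrite csum_cons. destruct (P a); rewrite ?csum_cons, IHl; ring. Qed.
Lemma csum_map {T U} (g : T -> U) l f : csum (map g l) f = csum l (fun x => f (g x)).
Proof. induction l. reflexivity. simpl map. rewrite !csum_cons, IHl. reflexivity. Qed.
Lemma csum_perm {T} (l l' : list T) f : Permutation l l' -> csum l f = csum l' f.
Proof. induction 1. reflexivity. rewrite !csum_cons; congruence. rewrite !csum_cons; ring. congruence. Qed.
Lemma csum_swap {T U} (l1 : list T) (l2 : list U) f :
  csum l1 (fun x => csum l2 (fun y => f x y)) = csum l2 (fun y => csum l1 (fun x => f x y)).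
Proof. induction l1. now rewrite csum_nil, csum_zero.
  rewrite csum_cons, IHl1, <- csum_plus. reflexivity. Qed.
Lemma csum_single_nat (l : list nat) (a : nat) (v : C) : NoDup l -> In a l ->
  csum l (fun x => if Nat.eqb x a then v else RtoC 0) = v.
Proof. induction 1; intros Hi; simpl In in Hi. contradiction.
  rewrite csum_cons. destruct Hi as [<-|Hi].
  - rewrite Nat.eqb_refl. rewrite (csum_ext _ _ (fun _ => RtoC 0)). rewrite csum_zero. ring.
    intros y Hy. destruct (Nat.eqb_spec y x); subst; tauto.
  - rewrite IHNoDup by auto. destruct (Nat.eqb_spec x a); subst. contradiction. ring. Qed.

Definition rsum {T} (l : list T) (f : T -> R) : R := fold_right (fun a acc => f a + acc) 0 l.
Lemma rsum_cons {T} (a:T) l f : rsum (a::l) f = f a + rsum l f. Proof. reflexivity. Qed.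
Lemma rsum_nonneg {T} (l : list T) f : (forall x, In x l -> 0 <= f x) -> 0 <= rsum l f.
Proof. induction l; intros H. unfold rsum; simpl; lra. pose proof (H a (or_introl eq_refl)).
  assert (0 <= rsum l f) by (apply IHl; auto; intros; apply H; simpl; auto). rewrite rsum_cons; lra. Qed.
Lemma rsum_ge_elt {T} (l : list T) f a : (forall x, In x l -> 0 <= f x) -> In a l -> f a <= rsum l f.
Proof. induction l; intros H Hi. contradiction. simpl In in Hi. rewrite rsum_cons.
  destruct Hi as [->|Hi]. assert (0 <= rsum l f) by (apply rsum_nonneg; intros; apply H; simpl; auto). lra.
  assert (f a <= rsum l f) by (apply IHl; auto; intros; apply H; simpl; auto). pose proof (H a0 (or_introl eq_refl)). lra. Qed.
Lemma rsum_scal_r {T} (l : list T) f k : rsum l (fun x => f x * k) = rsum l f * k.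
Proof. induction l. unfold rsum; simpl; ring. rewrite !rsum_cons, IHl. ring. Qed.
Lemma rsum_le {T} (l : list T) f g : (forall x, In x l -> f x <= g x) -> rsum l f <= rsum l g.
Proof. induction l; intros H. unfold rsum; simpl; lra. rewrite !rsum_cons.
  pose proof (H a (or_introl eq_refl)). assert (rsum l f <= rsum l g) by (apply IHl; auto; intros; apply H; simpl; auto). lra. Qed.
Lemma Cmod_csum {T} (l : list T) f : Cmod (csum l f) <= rsum l (fun x => Cmod (f x)).
Proof. induction l. rewrite csum_nil; unfold rsum; simpl. rewrite Cmod_0. lra.
  rewrite csum_cons, rsum_cons. eapply Rle_trans. apply Cmod_triangle. lra. Qed.
Lemma rsum_const {T} (l : list T) k : rsum l (fun _ => k) = INR (length l) * k.
Proof. induction l. unfold rsum; simpl; ring. simpl length. rewrite rsum_cons, IHl, S_INR. ring. Qed.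
Lemma Cmod_csum_bound {T} (l : list T) f B : (forall x, In x l -> Cmod (f x) <= B) ->
  Cmod (csum l f) <= INR (length l) * B.
Proof. intros H. eapply Rle_trans. apply Cmod_csum. rewrite <- rsum_const. apply rsum_le. auto. Qed.


Lemma sum_n_Re (a : nat -> C) n : Re (sum_n a n) = sum_n (fun k => Re (a k)) n.
Proof. induction n. rewrite !sum_O. reflexivity. rewrite !sum_Sn, <- IHn. reflexivity. Qed.
Lemma sum_n_Im (a : nat -> C) n : Im (sum_n a n) = sum_n (fun k => Im (a k)) n.
Proof. induction n. rewrite !sum_O. reflexivity. rewrite !sum_Sn, <- IHn. reflexivity. Qed.

Lemma is_series_Re (a : nat -> C) (l : C) : is_series a l -> is_series (fun n => Re (a n)) (Re l).
Proof. unfold is_series. intros H.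
  apply filterlim_ext with (fun n => Re (sum_n a n)). intros; apply sum_n_Re.
  eapply filterlim_comp. exact H. apply filterlim_locally. intros eps.
  exists eps. intros y [H1 H2]. exact H1. Qed.
Lemma is_series_Im (a : nat -> C) (l : C) : is_series a l -> is_series (fun n => Im (a n)) (Im l).
Proof. unfold is_series. intros H.
  apply filterlim_ext with (fun n => Im (sum_n a n)). intros; apply sum_n_Im.
  eapply filterlim_comp. exact H. apply filterlim_locally. intros eps.
  exists eps. intros y [H1 H2]. exact H2. Qed.

Lemma CSeries_is (a : nat -> C) (l : C) : is_series a l -> CSeries a = l.
Proof. intros H. unfold CSeries. rewrite (is_series_unique _ _ (is_series_Re _ _ H)).
  rewrite (is_series_unique _ _ (is_series_Im _ _ H)). destruct l; reflexivity. Qed.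

Lemma is_series_C_unique (a : nat -> C) l1 l2 : is_series a l1 -> is_series a l2 -> l1 = l2.
Proof. intros H1 H2. rewrite <- (CSeries_is _ _ H1). apply CSeries_is; auto. Qed.

Lemma CSeries_ext (a b : nat -> C) : (forall n, a n = b n) -> CSeries a = CSeries b.
Proof. intros H. unfold CSeries. f_equal; apply Series_ext; intros; rewrite H; auto. Qed.

Lemma is_series_C_abs (a : nat -> C) : ex_series (fun n => Cmod (a n)) -> is_series a (CSeries a).
Proof. intros H. assert (ex_series a) as [l Hl].
  apply (ex_series_le a (fun n => Cmod (a n))). intros n. apply Rle_refl. exact H.
  rewrite (CSeries_is _ _ Hl). exact Hl. Qed.

Lemma is_series_Cscal_l (a : nat -> C) k l : is_series a l -> is_series (fun n => Cmult k (a n)) (Cmult k l).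
Proof. intros H. apply (is_series_scal k a l H). Qed.
Lemma is_series_Cscal_r (a : nat -> C) k l : is_series a l -> is_series (fun n => Cmult (a n) k) (Cmult l k).
Proof. intros H. rewrite Cmult_comm. apply is_series_ext with (fun n => Cmult k (a n)).
  intros; apply Cmult_comm. apply is_series_Cscal_l; auto. Qed.

Lemma is_series_C0 : is_series (fun _ : nat => RtoC 0) (RtoC 0).
Proof. unfold is_series. apply filterlim_ext with (fun _ => RtoC 0).
  intros n. induction n. rewrite sum_O. reflexivity. rewrite sum_Sn, <- IHn.
  change (RtoC 0 = Cplus 0 0). ring. apply filterlim_const. Qed.

Lemma is_series_csum {T} (l : list T) (F : T -> nat -> C) (L : T -> C) :
  (forall x, In x l -> is_series (F x) (L x)) ->
  is_series (fun n => csum l (fun x => F x n)) (csum l L).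
Proof. induction l; intros H.
  - rewrite csum_nil. apply is_series_ext with (fun _ => RtoC 0). intros; rewrite csum_nil; auto.
    apply is_series_C0.
  - rewrite csum_cons. apply is_series_ext with (fun n => Cplus (F a n) (csum l (fun x => F x n))).
    intros; rewrite csum_cons; auto.
    apply (is_series_plus (F a) (fun n => csum l (fun x => F x n))).
    apply H; left; auto. apply IHl. intros; apply H; right; auto. Qed.

Lemma CSeries_scal_l (a : nat -> C) k l : is_series a l -> CSeries (fun n => Cmult k (a n)) = Cmult k l.
Proof. intros H. apply CSeries_is. apply is_series_Cscal_l; auto. Qed.

Lemma sum_n_csum (a : nat -> C) n : sum_n a n = csum (seq 0 (S n)) a.
Proof. induction n. rewrite sum_O. simpl seq. rewrite csum_cons, csum_nil. change (a 0%nat = a 0%nat + 0)%C. ring.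
  rewrite sum_Sn, IHn. rewrite (seq_S (S n)), csum_app, csum_cons, csum_nil. simpl plus.
  change (csum (seq 0 (S n)) a + a (S n) = csum (seq 0 (S n)) a + (a (S n) + 0))%C. ring. Qed.

Lemma block_sum (a : nat -> C) q k : (1 <= q)%nat ->
  (forall M, (q * k < M < q * k + q)%nat -> a M = RtoC 0) ->
  csum (seq (q * k) q) (fun i => a (S i)) = a (q * k + q)%nat.
Proof. intros Hq H. replace q with (S (q - 1)) at 2 by lia.
  rewrite seq_S, csum_app, csum_cons, csum_nil.
  rewrite (csum_ext _ _ (fun _ => RtoC 0)). rewrite csum_zero.
  replace (S (q * k + (q - 1))) with (q * k + q)%nat by lia. ring.
  intros x Hx. apply in_seq in Hx. apply H. lia. Qed.

Lemma is_series_sparse (a : nat -> C) q l : (1 <= q)%nat ->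
  (forall M, (M mod q <> 0)%nat -> a M = RtoC 0) ->
  is_series (fun i => a (S i)) l -> is_series (fun i => a (q * S i)%nat) l.
Proof. intros Hq Ha H. unfold is_series in *.
  assert (E : forall n, sum_n (fun i => a (q * S i)%nat) n = sum_n (fun i => a (S i)) (q * S n - 1)).
  { intros n. rewrite !sum_n_csum. replace (S (q * S n - 1)) with (q * S n)%nat by lia.
    induction n as [|n IHn].
    - simpl seq. rewrite csum_cons, csum_nil.
      assert (B : csum (seq (q * 0) q) (fun i => a (S i)) = a (q * 0 + q)%nat).
      { apply block_sum; auto. intros M HM. apply Ha. intros HM'.
        apply Nat.Div0.mod_divides in HM' as [j Hj]. subst M. destruct (Nat.lt_ge_cases j 1); nia. }
      rewrite Nat.mul_0_r, Nat.add_0_l in B. rewrite Nat.mul_1_r, B. apply Cplus_0_r.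
    - rewrite (seq_S (S n)), csum_app, csum_cons, csum_nil, IHn.
      replace (q * S (S n))%nat with (q * S n + q)%nat by lia. rewrite seq_app, csum_app.
      replace (0 + q * S n)%nat with (q * S n)%nat by lia.
      rewrite block_sum; auto. rewrite Cplus_0_r. f_equal. f_equal. lia.
      intros M HM; apply Ha. intros HM'. apply Nat.Div0.mod_divides in HM' as [j Hj]. subst M. destruct (Nat.lt_ge_cases j (S (S n))); nia. }
  apply filterlim_ext with (fun n => sum_n (fun i => a (S i)) (q * S n - 1)).
  intros; symmetry; apply E.
  eapply filterlim_comp with (f := fun n => (q * S n - 1)%nat). 2: exact H.
  apply eventually_subseq. intros n. nia. Qed.


Lemma e_add x y : Cmult (e x) (e y) = e (x + y).
Proof. unfold e, Cmult; simpl. replace (2 * PI * (x + y)) with (2*PI*x + 2*PI*y) by ring.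
  rewrite cos_plus, sin_plus. f_equal; ring. Qed.

Lemma e_int k : e (IZR k) = RtoC 1.
Proof. unfold e. assert (Hs : sin (PI * IZR k) = 0).
  { apply sin_eq_0_1. exists k. ring. }
  replace (2 * PI * IZR k) with (2 * (PI * IZR k)) by ring.
  rewrite cos_2a_sin, sin_2a, Hs. unfold RtoC. f_equal; ring. Qed.

Lemma e_shift x k : e (x + IZR k) = e x.
Proof. rewrite <- e_add, e_int. unfold RtoC, Cmult. destruct (e x); simpl. f_equal; ring. Qed.

Lemma e_0 : e 0 = RtoC 1.
Proof. apply (e_int 0). Qed.

Lemma Cmod_e x : Cmod (e x) = 1.
Proof. unfold e, Cmod; simpl fst; simpl snd.
  pose proof (sin2_cos2 (2 * PI * x)). unfold Rsqr in H.
  replace (cos (2 * PI * x) ^ 2 + sin (2 * PI * x) ^ 2) with 1 by (simpl; lra). apply sqrt_1. Qed.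

Lemma e_one_int y : e y = RtoC 1 -> exists k, y = IZR k.
Proof. unfold e, RtoC. intros H. injection H as H1 H2.
  replace (2 * PI * y) with (2 * (PI * y)) in H1 by ring. rewrite cos_2a_sin in H1.
  assert (sin (PI * y) = 0) by nra. apply sin_eq_0_0 in H as [k Hk]. exists k.
  pose proof PI_RGT_0. apply Rmult_eq_reg_l with PI; lra. Qed.

Lemma cpow_add x w v : cpow x (Cplus w v) = Cmult (cpow x w) (cpow x v).
Proof. unfold cpow, Cmult, Re, Im; simpl. rewrite !Rmult_plus_distr_r, exp_plus, cos_plus, sin_plus.
  f_equal; ring. Qed.

Lemma cpow_0 x : cpow x (RtoC 0) = RtoC 1.
Proof. unfold cpow, Re, Im; simpl. rewrite !Rmult_0_l, exp_0, cos_0, sin_0. unfold RtoC; f_equal; ring. Qed.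

Lemma cpow_1 x : 0 < x -> cpow x (RtoC 1) = RtoC x.
Proof. intros Hx. unfold cpow, Re, Im; simpl. rewrite Rmult_1_l, Rmult_0_l, exp_ln, cos_0, sin_0 by auto.
  unfold RtoC; f_equal; ring. Qed.

Lemma cpow_mul x y w : 0 < x -> 0 < y -> cpow (x * y) w = Cmult (cpow x w) (cpow y w).
Proof. intros Hx Hy. unfold cpow, Cmult, Re, Im; simpl. rewrite ln_mult by auto.
  rewrite !Rmult_plus_distr_l, exp_plus, cos_plus, sin_plus. f_equal; ring. Qed.

Lemma cpow_opp_mul x w : Cmult (cpow x w) (cpow x (Copp w)) = RtoC 1.
Proof. rewrite <- cpow_add. replace (Cplus w (Copp w)) with (RtoC 0) by ring. apply cpow_0. Qed.

Lemma cpow_nz x w : cpow x w <> RtoC 0.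
Proof. intros H. pose proof (cpow_opp_mul x w). rewrite H in H0.
  rewrite Cmult_0_l in H0. apply C1_nz. auto. Qed.

Lemma cpow_opp x w : cpow x (Copp w) = Cinv (cpow x w).
Proof. pose proof (cpow_opp_mul x w). pose proof (cpow_nz x w).
  apply (f_equal (Cmult (Cinv (cpow x w)))) in H. rewrite Cmult_assoc, Cinv_l, Cmult_1_l, Cmult_1_r in H; auto. Qed.

Lemma cpow_inv x w : 0 < x -> cpow (/ x) w = Cinv (cpow x w).
Proof. intros Hx. rewrite <- cpow_opp. unfold cpow, Re, Im. rewrite ln_Rinv by auto.
  simpl. f_equal; f_equal; f_equal; ring. Qed.

Lemma Cmod_cpow x w : Cmod (cpow x w) = exp (Re w * ln x).
Proof. unfold Cmod, cpow; simpl fst; simpl snd.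
  pose proof (sin2_cos2 (Im w * ln x)). unfold Rsqr in H.
  set (E := exp _). set (c := cos _) in *. set (s := sin _) in *.
  replace ((E*c)^2+(E*s)^2) with (Rsqr E) by (unfold Rsqr; transitivity (E*E*(s*s+c*c)); [rewrite H; ring| ring]).
  apply sqrt_Rsqr. left; apply exp_pos. Qed.

Lemma RtoC_nz x : x <> 0 -> RtoC x <> RtoC 0.
Proof. intros H H'. injection H' as H'. auto. Qed.


Lemma INR_pos_nz q : (1 <= q)%nat -> INR q <> 0.
Proof. intros; apply not_0_INR; lia. Qed.

Lemma e_cong (q : nat) (A B : Z) : (1 <= q)%nat -> (exists k, A = B + Z.of_nat q * k)%Z ->
  e (IZR A / INR q) = e (IZR B / INR q).
Proof. intros Hq [k ->]. rewrite plus_IZR, mult_IZR, <- INR_IZR_INZ.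
  replace ((IZR B + INR q * IZR k) / INR q) with (IZR B / INR q + IZR k).
  apply e_shift. field. apply INR_pos_nz; auto. Qed.

Lemma csum_const1 {T} (l : list T) : csum l (fun _ => RtoC 1) = RtoC (INR (length l)).
Proof. induction l. rewrite csum_nil. reflexivity. rewrite csum_cons, IHl. simpl length.
  rewrite S_INR, RtoC_plus. ring. Qed.

Lemma ortho (c : nat) (t : Z) : (1 <= c)%nat ->
  csum (seq 0 c) (fun b => e (IZR (Z.of_nat b * t) / INR c)) =
  if Z.eqb (t mod Z.of_nat c) 0 then RtoC (INR c) else RtoC 0.
Proof. intros Hc. set (g := fun b : nat => e (IZR (Z.of_nat b * t) / INR c)).
  set (z := e (IZR t / INR c)).
  assert (Hnz := INR_pos_nz c Hc).
  assert (gS : forall b, g (S b) = Cmult (g b) z).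
  { intros b. unfold g, z. rewrite e_add. f_equal. rewrite Nat2Z.inj_succ, Z.mul_succ_l, plus_IZR.
    field. auto. }
  assert (g0 : g 0%nat = RtoC 1). { unfold g. simpl. unfold Rdiv. rewrite Rmult_0_l. apply e_0. }
  assert (gc : g c = RtoC 1). { unfold g. rewrite mult_IZR, <- INR_IZR_INZ.
    replace (INR c * IZR t / INR c) with (IZR t) by (field; auto). apply e_int. }
  set (S0 := csum (seq 0 c) g).
  assert (E : Cmult S0 (Cminus z (RtoC 1)) = RtoC 0).
  { assert (E1 : csum (seq 0 (S c)) g = Cplus S0 (RtoC 1)).
    { rewrite seq_S, csum_app, csum_cons, csum_nil. simpl. rewrite gc. unfold S0. ring. }
    assert (E2 : csum (seq 0 (S c)) g = Cplus (RtoC 1) (Cmult S0 z)).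
    { simpl seq. rewrite csum_cons, g0. rewrite <- seq_shift, csum_map.
      rewrite (csum_ext _ _ (fun b => Cmult (g b) z)) by (intros; apply gS).
      rewrite csum_scal_r. reflexivity. }
    rewrite E1 in E2. unfold Cminus. rewrite Cmult_plus_distr_l.
    apply (f_equal (fun u => Cplus u (Copp (Cplus S0 (RtoC 1))))) in E2.
    replace (Cplus (Cplus S0 (RtoC 1)) (Copp (Cplus S0 (RtoC 1)))) with (RtoC 0) in E2 by ring.
    rewrite E2. ring. }
  destruct (Z.eqb_spec (t mod Z.of_nat c) 0) as [H0|H0].
  - apply Z.mod_divide in H0 as [k Hk]; [|lia].
    unfold S0 in *. clear E. unfold g. rewrite (csum_ext _ _ (fun _ => RtoC 1)).
    rewrite csum_const1, length_seq. reflexivity.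
    intros b _. subst t. rewrite Z.mul_assoc, mult_IZR, <- (INR_IZR_INZ c).
    replace (IZR (Z.of_nat b * k) * INR c / INR c) with (IZR (Z.of_nat b * k)) by (field; auto).
    apply e_int.
  - assert (Hz : Cminus z (RtoC 1) <> RtoC 0).
    { intros Hz. assert (z = RtoC 1). { apply (f_equal (fun u => Cplus u (RtoC 1))) in Hz.
        replace (Cplus (Cminus z (RtoC 1)) (RtoC 1)) with z in Hz by ring. rewrite Hz. ring. }
      apply e_one_int in H as [k Hk]. apply H0.
      assert (t = k * Z.of_nat c)%Z. { apply eq_IZR. rewrite mult_IZR, <- INR_IZR_INZ, <- Hk. field; auto. }
      subst t. apply Z.mod_mul. lia. }
    apply (f_equal (fun u => Cmult u (Cinv (Cminus z (RtoC 1))))) in E.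
    rewrite <- Cmult_assoc, Cinv_r, Cmult_1_r, Cmult_0_l in E; auto. Qed.

Lemma K_per q a a' b : (1 <= q)%nat -> (Z.of_nat q | a - a')%Z ->
  Kloosterman a b q = Kloosterman a' b q.
Proof. intros Hq [k Hk]. unfold Kloosterman. apply csum_ext; intros x _. apply csum_ext; intros y _.
  apply e_cong; auto. exists (k * Z.of_nat x)%Z. nia. Qed.

Definition nq (q x : nat) : nat := if Nat.eqb x 0 then 0%nat else (q - x)%nat.

Lemma nq_lt q x : (1 <= q)%nat -> (x < q)%nat -> (nq q x < q)%nat.
Proof. unfold nq; destruct (Nat.eqb_spec x 0); lia. Qed.
Lemma nq_nq q x : (x < q)%nat -> nq q (nq q x) = x.
Proof. unfold nq; destruct (Nat.eqb_spec x 0). rewrite Nat.eqb_refl; auto.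
  destruct (Nat.eqb_spec (q - x) 0); lia. Qed.

Lemma perm_nq q : (1 <= q)%nat -> Permutation (map (nq q) (seq 0 q)) (seq 0 q).
Proof. intros Hq. apply NoDup_Permutation.
  - apply NoDup_map_NoDup_ForallPairs. intros a b Ha Hb E. apply in_seq in Ha, Hb.
    rewrite <- (nq_nq q a), <- (nq_nq q b) by lia. congruence. apply seq_NoDup.
  - apply seq_NoDup.
  - intros x. rewrite in_map_iff, in_seq. split.
    + intros [y [<- Hy]]. apply in_seq in Hy. pose proof (nq_lt q y Hq). lia.
    + intros Hx. exists (nq q x). rewrite nq_nq by lia. split; auto. apply in_seq. pose proof (nq_lt q x Hq). lia. Qed.

Lemma csum_nq q (F : nat -> C) : (1 <= q)%nat -> csum (seq 0 q) F = csum (seq 0 q) (fun x => F (nq q x)).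
Proof. intros Hq. rewrite <- (csum_map (nq q) (seq 0 q) F). apply csum_perm. symmetry. apply perm_nq; auto. Qed.

Lemma nq_Z q x : (x < q)%nat -> exists d, Z.of_nat (nq q x) = (- Z.of_nat x + Z.of_nat q * d)%Z.
Proof. unfold nq. destruct (Nat.eqb_spec x 0). exists 0%Z; subst; simpl; lia. exists 1%Z. lia. Qed.

Lemma nq_gcd q x : (x < q)%nat -> Nat.gcd (nq q x) q = Nat.gcd x q.
Proof. intros Hx. unfold nq. destruct (Nat.eqb_spec x 0). subst; auto.
  rewrite <- (Nat.gcd_sub_diag_r (q - x) q) by lia. replace (q - (q - x))%nat with x by lia.
  rewrite Nat.gcd_comm. rewrite (Nat.gcd_sub_diag_r x q) by lia. reflexivity. Qed.

Lemma nq_prod q x y : (x < q)%nat -> (y < q)%nat -> ((nq q x * nq q y) mod q = (x * y) mod q)%nat.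
Proof. intros Hx Hy. unfold nq. destruct (Nat.eqb_spec x 0), (Nat.eqb_spec y 0); subst;
  rewrite ?Nat.mul_0_l, ?Nat.mul_0_r; auto.
  rewrite <- (Nat.Div0.mod_add ((q - x) * (q - y)) (x + y) q).
  rewrite <- (Nat.Div0.mod_add (x * y) q q). f_equal. nia. Qed.

Lemma K_neg q a b : (1 <= q)%nat -> Kloosterman (-a) (-b) q = Kloosterman a b q.
Proof. intros Hq. unfold Kloosterman, units_mod. rewrite !csum_filter.
  rewrite (csum_nq q _ Hq). apply csum_ext. intros x Hx. apply in_seq in Hx.
  rewrite nq_gcd by lia. destruct (Nat.eqb (Nat.gcd x q) 1); [|reflexivity].
  rewrite !csum_filter. rewrite (csum_nq q _ Hq). apply csum_ext. intros y Hy. apply in_seq in Hy.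
  rewrite nq_prod by lia. destruct (Nat.eqb _ _); [|reflexivity].
  symmetry. apply e_cong; auto.
  destruct (nq_Z q x) as [dx Hdx]; [lia|]. destruct (nq_Z q y) as [dy Hdy]; [lia|].
  rewrite Hdx, Hdy. exists (a * dx + b * dy)%Z. ring. Qed.

Definition sgn_sq s : (sgn s * sgn s = 1)%Z.
Proof. destruct s; reflexivity. Qed.

Lemma K_move q s a a' b : (1 <= q)%nat -> (Z.of_nat q | sgn s * a + a')%Z ->
  Kloosterman a b q = Kloosterman a' (- sgn s * b)%Z q.
Proof. intros Hq Hd. destruct s; simpl sgn in *.
  - rewrite (K_per q a (- a') b Hq). replace b with (- (-1 * b))%Z at 1 by ring. apply K_neg; auto.
    replace (a - - a')%Z with (1 * a + a')%Z by ring. auto.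
  - rewrite (K_per q a a' b Hq). f_equal; ring.
    destruct Hd as [k Hk]. exists (- k)%Z. lia. Qed.


Lemma ex_series_bounded (a : nat -> R) M : (forall n, 0 <= a n) -> (forall N, sum_n a N <= M) -> ex_series a.
Proof. intros Ha HM. assert (H : ex_finite_lim_seq (sum_n a)).
  { apply ex_finite_lim_seq_incr with M; auto. intros n. rewrite sum_Sn. specialize (Ha (S n)).
    change (sum_n a n <= sum_n a n + a (S n)). lra. }
  destruct H as [l Hl]. exists l. exact Hl. Qed.

Lemma ln_ge_inv x : 0 < x -> 1 - / x <= ln x.
Proof. intros Hx. assert (H : ln (/ x) <= / x - 1).
  { pose proof (exp_ineq1_le (/ x - 1)). assert (0 < / x) by (apply Rinv_0_lt_compat; auto).
    rewrite <- (ln_exp (/ x - 1)). apply ln_le; auto. lra. }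
  rewrite ln_Rinv in H by auto. lra. Qed.

Lemma pser_step x p : 1 <= x -> 0 < p ->
  Rpower (x + 1) (- p - 1) <= / p * (Rpower x (- p) - Rpower (x + 1) (- p)).
Proof. intros Hx Hp. unfold Rpower.
  set (L0 := ln x). set (L1 := ln (x + 1)).
  assert (Hd : / (x + 1) <= L1 - L0).
  { unfold L1, L0. rewrite <- ln_div by lra. pose proof (ln_ge_inv ((x+1)/x)).
    replace (/ (x + 1)) with (1 - / ((x+1)/x)) by (field; lra). apply H. apply Rdiv_lt_0_compat; lra. }
  assert (E1 : exp ((- p - 1) * L1) = exp (- p * L1) * / (x + 1)).
  { replace ((- p - 1) * L1) with (- p * L1 + - L1) by ring. rewrite exp_plus, exp_Ropp.
    unfold L1. rewrite exp_ln by lra. reflexivity. }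
  assert (E2 : exp (- p * L0) = exp (- p * L1) * exp (p * (L1 - L0))).
  { rewrite <- exp_plus. f_equal. ring. }
  rewrite E1, E2. pose proof (exp_ineq1_le (p * (L1 - L0))).
  set (b := exp (- p * L1)). assert (0 < b) by apply exp_pos.
  set (E := exp (p * (L1 - L0))) in *.
  assert (HE : p * / (x + 1) <= E - 1). { assert (p * / (x + 1) <= p * (L1 - L0)) by (apply Rmult_le_compat_l; lra). lra. }
  replace (/ p * (b * E - b)) with (b * ((E - 1) * / p)) by ring.
  apply Rmult_le_compat_l. lra.
  replace (/ (x + 1)) with (p * / (x + 1) * / p) by (field; lra).
  apply Rmult_le_compat_r. left; apply Rinv_0_lt_compat; auto. auto. Qed.

Lemma pser_bound t : t < -1 -> forall N,
  sum_n (fun j => Rpower (INR (S j)) t) N <= 1 + / (- t - 1) * (1 - Rpower (INR (S N)) (t + 1)).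
Proof. intros Ht. set (p := - t - 1). assert (Hp : 0 < p) by (unfold p; lra).
  induction N.
  - rewrite sum_O. replace (INR 1) with 1 by (simpl; ring). unfold Rpower. rewrite ln_1, !Rmult_0_r, exp_0. lra.
  - rewrite sum_Sn. change (sum_n (fun j => Rpower (INR (S j)) t) N + Rpower (INR (S (S N))) t <=
      1 + / p * (1 - Rpower (INR (S (S N))) (t + 1))).
    pose proof (pser_step (INR (S N)) p). rewrite <- S_INR in H.
    replace (- p - 1) with t in H by (unfold p; ring). replace (- p) with (t + 1) in H by (unfold p; ring).
    assert (1 <= INR (S N)) by (apply (le_INR 1); lia). specialize (H H0 Hp).
    assert (0 < / p) by (apply Rinv_0_lt_compat; auto). nra. Qed.

Lemma Rpower_pos x y : 0 < Rpower x y.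
Proof. apply exp_pos. Qed.

Lemma pser_bound' t : t < -1 -> forall N, sum_n (fun j => Rpower (INR (S j)) t) N <= 1 + / (- t - 1).
Proof. intros Ht N. pose proof (pser_bound t Ht N). pose proof (Rpower_pos (INR (S N)) (t + 1)).
  assert (0 < / (- t - 1)) by (apply Rinv_0_lt_compat; lra). nra. Qed.

Lemma pser t : t < -1 -> ex_series (fun j => Rpower (INR (S j)) t).
Proof. intros Ht. apply ex_series_bounded with (1 + / (- t - 1)).
  intros; left; apply Rpower_pos. apply pser_bound'; auto. Qed.

Lemma abel_bound (u w : nat -> R) K : (forall N, sum_n u N <= K * INR (S N)) ->
  (forall j, 0 <= w j) -> (forall j, w (S j) <= w j) ->
  forall N, sum_n (fun j => u j * w j) N <= K * sum_n w N.
Proof. intros HU Hw0 Hw.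
  assert (Hs : forall N, sum_n (fun j => u j * w j) N <= K * sum_n w N + (sum_n u N - K * INR (S N)) * w N).
  { induction N.
    - rewrite !sum_O. simpl INR. lra.
    - rewrite !sum_Sn. change (sum_n (fun j => u j * w j) N + u (S N) * w (S N) <=
         K * (sum_n w N + w (S N)) + (sum_n u N + u (S N) - K * INR (S (S N))) * w (S N)).
      rewrite (S_INR (S N)). specialize (HU N). specialize (Hw N).
      assert ((sum_n u N - K * INR (S N)) * w N <= (sum_n u N - K * INR (S N)) * w (S N)).
      { apply Rmult_le_compat_neg_l; lra. }
      lra. }
  intros N. specialize (Hs N). specialize (HU N). specialize (Hw0 N).
  assert ((sum_n u N - K * INR (S N)) * w N <= 0). { apply Rmult_le_0_r; lra. } lra. Qed.


Lemma fold_map_rsum {T} (l : list T) f : fold_right Rplus 0 (map f l) = rsum l f.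
Proof. induction l. reflexivity. simpl. rewrite IHl. reflexivity. Qed.
Lemma rsum_app {T} (l1 l2 : list T) f : rsum (l1 ++ l2) f = rsum l1 f + rsum l2 f.
Proof. induction l1. unfold rsum; simpl; ring. rewrite <- app_comm_cons, !rsum_cons, IHl1. ring. Qed.
Lemma rsum_map {T U} (g : T -> U) l f : rsum (map g l) f = rsum l (fun x => f (g x)).
Proof. induction l. reflexivity. simpl map. rewrite !rsum_cons, IHl. reflexivity. Qed.
Lemma sum_n_rsum (a : nat -> R) N : sum_n a N = rsum (seq 0 (S N)) a.
Proof. induction N. rewrite sum_O. simpl seq. rewrite rsum_cons. unfold rsum; simpl; ring.
  rewrite sum_Sn, IHN, (seq_S (S N)), rsum_app, rsum_cons. unfold rsum at 3; simpl. unfold plus; simpl. ring. Qed.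
Lemma rsum_ext {T} (l : list T) f g : (forall x, In x l -> f x = g x) -> rsum l f = rsum l g.
Proof. induction l; intros H. reflexivity. rewrite !rsum_cons, H, IHl; auto.
  intros; apply H; right; auto. left; auto. Qed.

Lemma row_bound (A : nat -> nat -> C) (HA : HeckeMaassCoeffs A) n1 : (1 <= n1)%nat ->
  exists K, forall N, sum_n (fun j => Cmod (A (S j) n1) ^ 2) N <= K * INR (S N).
Proof. intros Hn1. destruct (hm_rankin_selberg A HA) as [K HK].
  exists (K * INR n1 * INR n1). intros N. set (X := (n1 * n1 * S N)%nat).
  specialize (HK X). rewrite fold_map_rsum in HK.
  rewrite (rsum_ext _ _ (fun m1 => rsum (seq 1 X) (fun m2 => if (m1 * m1 * m2 <=? X)%nat then Cmod (A m1 m2) ^ 2 else 0))) in HK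
    by (intros; apply fold_map_rsum).
  assert (Hnn : forall m1, 0 <= rsum (seq 1 X) (fun m2 => if (m1 * m1 * m2 <=? X)%nat then Cmod (A m1 m2) ^ 2 else 0)).
  { intros m1. apply rsum_nonneg. intros. destruct (_ <=? _)%nat. apply pow2_ge_0. lra. }
  assert (H1 : rsum (seq 1 X) (fun m2 => if (n1 * n1 * m2 <=? X)%nat then Cmod (A n1 m2) ^ 2 else 0) <= K * INR X).
  { eapply Rle_trans; [|exact HK].
    apply (rsum_ge_elt (seq 1 X) (fun m1 => rsum (seq 1 X) (fun m2 => if (m1 * m1 * m2 <=? X)%nat then Cmod (A m1 m2) ^ 2 else 0)) n1).
    intros; apply Hnn. apply in_seq. unfold X. nia. }
  replace X with (S N + (X - S N))%nat in H1 at 1 by (unfold X; nia).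
  rewrite seq_app, rsum_app in H1.
  assert (H2 : 0 <= rsum (seq (1 + S N) (X - S N)) (fun m2 => if (n1 * n1 * m2 <=? X)%nat then Cmod (A n1 m2) ^ 2 else 0)).
  { apply rsum_nonneg. intros. destruct (_ <=? _)%nat. apply pow2_ge_0. lra. }
  rewrite (rsum_ext _ _ (fun m2 => Cmod (A n1 m2) ^ 2)) in H1.
  2:{ intros m2 Hm2. apply in_seq in Hm2. replace (n1 * n1 * m2 <=? X)%nat with true. auto.
      symmetry. apply Nat.leb_le. unfold X. nia. }
  rewrite sum_n_rsum. rewrite <- (rsum_map S (seq 0 (S N)) (fun m2 => Cmod (A m2 n1) ^ 2)), seq_shift.
  rewrite (rsum_ext _ _ (fun m2 => Cmod (A n1 m2) ^ 2)).
  2:{ intros. rewrite (hm_dual A HA), Cmod_conj. reflexivity. }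
  unfold X in H1, H2. rewrite !mult_INR in H1. replace (K * INR n1 * INR n1 * INR (S N)) with (K * (INR n1 * INR n1 * INR (S N))) by ring. lra. Qed.

Lemma Rpower_decr t x y : t <= 0 -> 0 < x -> x <= y -> Rpower y t <= Rpower x t.
Proof. intros Ht Hx Hxy. unfold Rpower. destruct (Rle_lt_or_eq_dec _ _ Ht) as [Ht' | ->].
  2: { rewrite !Rmult_0_l. lra. }
  destruct (Rle_lt_or_eq_dec _ _ Hxy) as [H | ->]. 2: lra.
  left. apply exp_increasing. apply Rmult_lt_gt_compat_neg_l; auto. apply ln_increasing; auto. Qed.

Lemma A_sum (A : nat -> nat -> C) (HA : HeckeMaassCoeffs A) n1 u : (1 <= n1)%nat -> u < 0 ->
  ex_series (fun j => Cmod (A (S j) n1) * Rpower (INR (S j)) (u - 1)).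
Proof. intros Hn1 Hu. destruct (row_bound A HA n1 Hn1) as [K HK].
  set (w := fun j => Rpower (INR (S j)) (u - 1)).
  set (K' := Rmax K 0).
  assert (Hsq : ex_series (fun j => Cmod (A (S j) n1) ^ 2 * w j)).
  { apply ex_series_bounded with (K' * (1 + / (- (u - 1) - 1))).
    intros; apply Rmult_le_pos. apply pow2_ge_0. left; apply Rpower_pos.
    intros N. eapply Rle_trans. apply (abel_bound _ w K').
    - intros M. eapply Rle_trans. apply HK. apply Rmult_le_compat_r. apply pos_INR. apply Rmax_l.
    - intros; left; apply Rpower_pos.
    - intros j. unfold w. apply Rpower_decr. lra. apply lt_0_INR; lia. apply le_INR; lia.
    - apply Rmult_le_compat_l. apply Rmax_r. apply pser_bound'. lra. }
  assert (Hw : ex_series w) by (apply pser; lra).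
  apply (ex_series_le (V := R_CompleteNormedModule) _ (fun j => / 2 * (Cmod (A (S j) n1) ^ 2 * w j + w j))).
  - intros j. assert (0 < w j) by apply Rpower_pos. pose proof (Cmod_ge_0 (A (S j) n1)).
    change (Rabs (Cmod (A (S j) n1) * w j) <= / 2 * (Cmod (A (S j) n1) ^ 2 * w j + w j)).
    rewrite Rabs_pos_eq by nra. fold (w j). set (a := Cmod (A (S j) n1)) in *. pose proof (Rmult_le_pos ((a - 1) ^ 2) (w j) (pow2_ge_0 _) (Rlt_le _ _ H)). nra.
  - apply (ex_series_scal (V := R_NormedModule) (/ 2)). apply (ex_series_plus (V := R_NormedModule)); auto. Qed.


Lemma two_w w : Cplus w w = Cmult (RtoC 2) w.
Proof. replace (RtoC 2) with (Cplus (RtoC 1) (RtoC 1)). ring.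
  rewrite <- RtoC_plus. replace (1+1) with 2 by ring. reflexivity. Qed.
Lemma cpow_m1 x w : 0 < x -> cpow x (Cminus w (RtoC 1)) = Cdiv (cpow x w) (RtoC x).
Proof. intros Hx. unfold Cminus. rewrite cpow_add, cpow_opp, cpow_1 by auto. reflexivity. Qed.
Lemma cpow_1m x w : 0 < x -> cpow x (Cminus (RtoC 1) w) = Cdiv (RtoC x) (cpow x w).
Proof. intros Hx. unfold Cminus. rewrite cpow_add, cpow_opp, cpow_1 by auto. reflexivity. Qed.
Lemma cpow_2m1 x w : 0 < x -> cpow x (Cminus (Cmult (RtoC 2) w) (RtoC 1)) = Cdiv (Cmult (cpow x w) (cpow x w)) (RtoC x).
Proof. intros Hx. rewrite cpow_m1 by auto. replace (Cmult (RtoC 2) w) with (Cplus w w).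
  rewrite cpow_add. reflexivity. apply two_w. Qed.
Lemma cpow_1m2 x w : 0 < x -> cpow x (Cminus (RtoC 1) (Cmult (RtoC 2) w)) = Cdiv (RtoC x) (Cmult (cpow x w) (cpow x w)).
Proof. intros Hx. rewrite cpow_1m by auto. replace (Cmult (RtoC 2) w) with (Cplus w w).
  rewrite cpow_add. reflexivity. apply two_w. Qed.
Lemma cpow_1mm x w v : 0 < x -> cpow x (Cminus (Cminus (RtoC 1) w) v) = Cdiv (RtoC x) (Cmult (cpow x w) (cpow x v)).
Proof. intros Hx. unfold Cminus. rewrite !cpow_add, !cpow_opp, cpow_1 by auto. unfold Cdiv.
  field. split; apply cpow_nz. Qed.

Lemma INR_S_pos n : 0 < INR (S n).
Proof. apply lt_0_INR; lia. Qed.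
Lemma INR_pos n : (1 <= n)%nat -> 0 < INR n.
Proof. intros; apply lt_0_INR; lia. Qed.
Lemma RtoC_INR_nz n : (1 <= n)%nat -> RtoC (INR n) <> RtoC 0.
Proof. intros; apply RtoC_nz; apply INR_pos_nz; auto. Qed.

Lemma in_divisors l c : In c (divisors l) <-> (1 <= c <= l)%nat /\ (l mod c = 0)%nat.
Proof. unfold divisors. rewrite filter_In, in_seq, Nat.eqb_eq. lia. Qed.
Lemma divisors_NoDup l : NoDup (divisors l).
Proof. apply NoDup_filter, seq_NoDup. Qed.
Lemma div_mul_l l c : (1 <= c)%nat -> (l mod c = 0)%nat -> (c * (l / c) = l)%nat.
Proof. intros Hc Hm. symmetry. apply Nat.Div0.div_exact. auto. Qed.
Lemma div_ge1 l c : (1 <= l)%nat -> (1 <= c)%nat -> (l mod c = 0)%nat -> (1 <= l / c)%nat.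
Proof. intros Hl Hc Hm. pose proof (div_mul_l l c Hc Hm). destruct (l / c)%nat; lia. Qed.

Lemma Zmod_eq_of (a b c : Z) : (c <> 0)%Z -> (c | a - b)%Z -> (a mod c = b mod c)%Z.
Proof. intros Hc [k Hk]. replace a with (b + k * c)%Z by lia. apply Z.mod_add; auto. Qed.

Lemma cond_iff (s : bool) (c d m : nat) : (1 <= c)%nat -> (d < c)%nat ->
  (Z.of_nat c | sgn s * Z.of_nat d + Z.of_nat m)%Z <-> Z.of_nat d = ((- sgn s * Z.of_nat m) mod Z.of_nat c)%Z.
Proof. intros Hc Hd. split.
  - intros Hdiv. symmetry. apply Znumtheory.Zdivide_mod_minus. lia.
    destruct Hdiv as [k Hk]. exists (- sgn s * k)%Z.
    replace (- sgn s * Z.of_nat m - Z.of_nat d)%Z with (- sgn s * (sgn s * Z.of_nat d + Z.of_nat m))%Z.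
    rewrite Hk. apply Z.mul_assoc. destruct s; simpl sgn; ring.
  - intros Hx. assert (H := Znumtheory.Zmod_divide_minus (- sgn s * Z.of_nat m) (Z.of_nat c) (Z.of_nat d) ltac:(lia) (eq_sym Hx)).
    destruct H as [k Hk]. exists (- sgn s * k)%Z.
    replace (sgn s * Z.of_nat d + Z.of_nat m)%Z with (- sgn s * (- sgn s * Z.of_nat m - Z.of_nat d))%Z.
    rewrite Hk. ring. destruct s; simpl sgn; ring. Qed.

Definition d0 (s : bool) (c m : nat) : nat := if s then ((c - m mod c) mod c)%nat else (m mod c)%nat.

Lemma d0_lt s c m : (1 <= c)%nat -> (d0 s c m < c)%nat.
Proof. intros Hc. unfold d0. destruct s; apply Nat.mod_upper_bound; lia. Qed.

Lemma d0_Z s c m : (1 <= c)%nat -> Z.of_nat (d0 s c m) = ((- sgn s * Z.of_nat m) mod Z.of_nat c)%Z.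
Proof. intros Hc. unfold d0. destruct s; simpl sgn; rewrite Nat2Z.inj_mod.
  - pose proof (Nat.mod_upper_bound m c ltac:(lia)). rewrite Nat2Z.inj_sub by lia.
    apply Zmod_eq_of. lia. rewrite Nat2Z.inj_mod.
    exists (1 + Z.of_nat m / Z.of_nat c)%Z. pose proof (Z.div_mod (Z.of_nat m) (Z.of_nat c) ltac:(lia)). lia.
  - f_equal. ring. Qed.

Lemma gcd_mod_inv a c : Nat.gcd a c = Nat.gcd (a mod c) c.
Proof. rewrite Nat.Lcm0.gcd_mod. apply Nat.gcd_comm. Qed.

Lemma d0_gcd s c m : (1 <= c)%nat -> Nat.gcd (d0 s c m) c = Nat.gcd m c.
Proof. intros Hc. unfold d0. destruct s.
  - rewrite <- gcd_mod_inv. pose proof (Nat.mod_upper_bound m c ltac:(lia)).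
    rewrite (gcd_mod_inv m c). set (r := (m mod c)%nat) in *.
    rewrite <- (Nat.gcd_sub_diag_r (c - r) c) by lia. replace (c - (c - r))%nat with r by lia.
    rewrite Nat.gcd_comm, (Nat.gcd_sub_diag_r r c) by lia. reflexivity.
  - rewrite <- gcd_mod_inv. reflexivity. Qed.

Lemma cond_bool (s : bool) (c d m : nat) : (1 <= c)%nat -> (d < c)%nat ->
  Z.eqb ((sgn s * Z.of_nat d + Z.of_nat m) mod Z.of_nat c) 0 = Nat.eqb d (d0 s c m).
Proof. intros Hc Hd. destruct (Z.eqb_spec ((sgn s * Z.of_nat d + Z.of_nat m) mod Z.of_nat c) 0) as [H|H];
  destruct (Nat.eqb_spec d (d0 s c m)) as [H'|H']; auto.
  - exfalso. apply H'. apply Nat2Z.inj. rewrite d0_Z by auto. apply cond_iff; auto.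
    apply Z.mod_divide; auto. lia.
  - exfalso. apply H. apply Z.mod_divide. lia. apply cond_iff; auto. rewrite H', d0_Z by auto. reflexivity. Qed.

(* partition of M by gcd with l *)
Definition indc (l c M : nat) : bool := Nat.eqb (M mod (l / c)) 0 && Nat.eqb (Nat.gcd (M / (l / c)) c) 1.

Lemma indc_iff l c M : (1 <= l)%nat -> (1 <= M)%nat -> In c (divisors l) ->
  indc l c M = Nat.eqb c (l / Nat.gcd M l).
Proof. intros Hl HM Hc. apply in_divisors in Hc as [Hc1 Hc2].
  set (q := (l / c)%nat). assert (Hq : (c * q = l)%nat) by (apply div_mul_l; lia).
  assert (Hq1 : (1 <= q)%nat) by (destruct q; lia).
  set (g := Nat.gcd M l).
  assert (Hg : (1 <= g)%nat). { destruct g eqn:E; [|lia]. apply Nat.gcd_eq_0 in E. lia. }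
  unfold indc. fold q.
  destruct (Nat.eqb_spec c (l / g)) as [Ec|Ec].
  -
    assert (Eqg : q = g). { destruct (Nat.gcd_divide_r M l) as [k Hk]. fold g in Hk.
      assert (l / g = k)%nat by (rewrite Hk; apply Nat.div_mul; lia). subst c.
      assert (k * q = k * g)%nat by lia. apply Nat.mul_cancel_l in H0; lia. }
    rewrite Eqg. destruct (Nat.gcd_divide_l M l) as [j Hj]. fold g in Hj.
    rewrite Hj, Nat.Div0.mod_mul, Nat.div_mul by lia. simpl.
    apply Nat.eqb_eq. assert (j = M / g)%nat by (rewrite Hj, Nat.div_mul; lia).
    assert (c = l / g)%nat by auto. rewrite H, H0. apply Nat.gcd_div_gcd. lia. reflexivity.
  - destruct (Nat.eqb_spec (M mod q) 0) as [Hm|Hm]; simpl; auto.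
    destruct (Nat.eqb_spec (Nat.gcd (M / q) c) 1) as [Hg1|Hg1]; auto. exfalso. apply Ec.
    assert (HM' : M = (q * (M / q))%nat) by (apply Nat.Div0.div_exact; auto).
    assert (g = q). { unfold g. rewrite HM', <- Hq, (Nat.mul_comm c q), Nat.gcd_mul_mono_l, Hg1. lia. }
    rewrite H, <- Hq. rewrite Nat.div_mul; lia. Qed.

Lemma c0_in l M : (1 <= l)%nat -> In (l / Nat.gcd M l)%nat (divisors l).
Proof. intros Hl. apply in_divisors. set (g := Nat.gcd M l).
  destruct (Nat.gcd_divide_r M l) as [k Hk]. fold g in Hk.
  assert (1 <= g)%nat. { destruct g eqn:E; [|lia]. apply Nat.gcd_eq_0 in E. lia. }
  rewrite Hk, Nat.div_mul by lia. split. nia. rewrite (Nat.mul_comm k g). apply Nat.Div0.mod_mul. Qed.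


Lemma units_len q : (length (units_mod q) <= q)%nat.
Proof. unfold units_mod. eapply Nat.le_trans. apply filter_length_le. rewrite length_seq. lia. Qed.

Lemma Kl_bound a b q : Cmod (Kloosterman a b q) <= INR q * INR q.
Proof. unfold Kloosterman. eapply Rle_trans. apply Cmod_csum_bound with (B := INR q).
  - intros x _. eapply Rle_trans. apply Cmod_csum_bound with (B := 1).
    intros; rewrite Cmod_e; lra. rewrite Rmult_1_r. apply le_INR.
    eapply Nat.le_trans. apply filter_length_le. rewrite length_seq. lia.
  - apply Rmult_le_compat_r. apply pos_INR. apply le_INR, units_len. Qed.

Lemma Cmod_cpow_m1 x w : Cmod (cpow x (Cminus w (RtoC 1))) = Rpower x (Re w - 1).
Proof. rewrite Cmod_cpow. reflexivity. Qed.

Definition gterm (A : nat -> nat -> C) (l : nat) (w2 : C) (sg : Z) (n1 : nat) (a : Z) (j : nat) : C :=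
  Cmult (Cmult (A (S j) n1) (cpow (INR (S j)) (Cminus w2 (RtoC 1)))) (Kloosterman a (sg * Z.of_nat (S j)) (l / n1)).
Definition G A l w2 sg n1 a := CSeries (gterm A l w2 sg n1 a).

Lemma gterm_abs A (HA : HeckeMaassCoeffs A) l w2 sg n1 a : (1 <= n1)%nat -> Re w2 < 0 ->
  ex_series (fun j => Cmod (gterm A l w2 sg n1 a j)).
Proof. intros Hn1 Hu. set (q := (l / n1)%nat).
  apply (ex_series_le (V := R_CompleteNormedModule) _ (fun j => (INR q * INR q) * (Cmod (A (S j) n1) * Rpower (INR (S j)) (Re w2 - 1)))).
  - intros j. change (Rabs (Cmod (gterm A l w2 sg n1 a j)) <= INR q * INR q * (Cmod (A (S j) n1) * Rpower (INR (S j)) (Re w2 - 1))).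
    rewrite Rabs_pos_eq by apply Cmod_ge_0. unfold gterm. rewrite !Cmod_mult, Cmod_cpow_m1.
    pose proof (Kl_bound a (sg * Z.of_nat (S j)) (l / n1)). fold q in H.
    pose proof (Cmod_ge_0 (A (S j) n1)). pose proof (Rpower_pos (INR (S j)) (Re w2 - 1)).
    pose proof (Cmod_ge_0 (Kloosterman a (sg * Z.of_nat (S j)) q)). fold q.
    assert (0 <= Cmod (A (S j) n1) * Rpower (INR (S j)) (Re w2 - 1)) by nra. nra.
  - apply (ex_series_scal (V := R_NormedModule)). apply A_sum; auto. Qed.

Lemma G_is A (HA : HeckeMaassCoeffs A) l w2 sg n1 a : (1 <= n1)%nat -> Re w2 < 0 ->
  is_series (gterm A l w2 sg n1 a) (G A l w2 sg n1 a).
Proof. intros. apply is_series_C_abs. apply gterm_abs; auto. Qed.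

Lemma G_per A l w2 sg n1 a a' : (1 <= l / n1)%nat -> (Z.of_nat (l / n1) | a - a')%Z ->
  G A l w2 sg n1 a = G A l w2 sg n1 a'.
Proof. intros Hq Hd. unfold G. apply CSeries_ext. intros j. unfold gterm. f_equal. apply K_per; auto. Qed.

Definition Gb A l w2 sg n1 := rsum (seq 0 (l / n1)) (fun r => Cmod (G A l w2 sg n1 (Z.of_nat r))).

Lemma G_bound A l w2 sg n1 M : (1 <= l / n1)%nat -> Cmod (G A l w2 sg n1 (Z.of_nat M)) <= Gb A l w2 sg n1.
Proof. intros Hq. set (q := (l / n1)%nat) in *.
  rewrite (G_per A l w2 sg n1 (Z.of_nat M) (Z.of_nat (M mod q))); auto.
  unfold Gb. fold q. apply (rsum_ge_elt _ (fun r => Cmod (G A l w2 sg n1 (Z.of_nat r)))).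
  intros; apply Cmod_ge_0. apply in_seq. pose proof (Nat.mod_upper_bound M q). lia.
  rewrite Nat2Z.inj_mod. exists (Z.of_nat M / Z.of_nat q)%Z. pose proof (Z.div_mod (Z.of_nat M) (Z.of_nat q)). lia. Qed.

Definition hM A l w1 w2 sg (M : nat) : C :=
  Cmult (cpow (INR l) (Cminus (Cminus (RtoC 1) w1) w2))
    (csum (divisors l) (fun n1 => Cmult (Cmult (cpow (INR M) (Cminus w1 (RtoC 1)))
       (cpow (INR n1) (Cminus (Cmult (RtoC 2) w2) (RtoC 1)))) (G A l w2 sg n1 (Z.of_nat M)))).

Definition rterm A l w1 w2 sg n1 (i : nat) : C :=
  Cmult (Cmult (cpow (INR (S i)) (Cminus w1 (RtoC 1))) (cpow (INR n1) (Cminus (Cmult (RtoC 2) w2) (RtoC 1))))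
        (G A l w2 sg n1 (Z.of_nat (S i))).

Lemma rterm_abs A l w1 w2 sg n1 : In n1 (divisors l) -> (1 <= l)%nat -> Re w1 < 0 ->
  ex_series (fun i => Cmod (rterm A l w1 w2 sg n1 i)).
Proof. intros Hn Hl Hu. apply in_divisors in Hn as [Hn1 Hn2].
  assert (Hq : (1 <= l / n1)%nat) by (apply div_ge1; lia).
  set (B := Cmod (cpow (INR n1) (Cminus (Cmult (RtoC 2) w2) (RtoC 1))) * Gb A l w2 sg n1).
  apply (ex_series_le (V := R_CompleteNormedModule) _ (fun i => B * Rpower (INR (S i)) (Re w1 - 1))).
  - intros i. change (Rabs (Cmod (rterm A l w1 w2 sg n1 i)) <= B * Rpower (INR (S i)) (Re w1 - 1)).
    rewrite Rabs_pos_eq by apply Cmod_ge_0. unfold rterm, B. rewrite !Cmod_mult, Cmod_cpow_m1.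
    pose proof (G_bound A l w2 sg n1 (S i) Hq).
    pose proof (Rpower_pos (INR (S i)) (Re w1 - 1)). pose proof (Cmod_ge_0 (cpow (INR n1) (Cminus (Cmult (RtoC 2) w2) (RtoC 1)))).
    pose proof (Cmod_ge_0 (G A l w2 sg n1 (Z.of_nat (S i)))).
    set (r := Rpower (INR (S i)) (Re w1 - 1)) in *. set (cc := Cmod (cpow (INR n1) _)) in *.
    set (g := Cmod (G A l w2 sg n1 (Z.of_nat (S i)))) in *.
    replace (cc * Gb A l w2 sg n1 * r) with ((r * cc) * Gb A l w2 sg n1) by ring.
    apply Rmult_le_compat_l; auto. apply Rmult_le_pos; lra.
  - apply (ex_series_scal (V := R_NormedModule)). apply pser. lra. Qed.

Lemma hM_rterm A l w1 w2 sg i : hM A l w1 w2 sg (S i) =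
  Cmult (cpow (INR l) (Cminus (Cminus (RtoC 1) w1) w2)) (csum (divisors l) (fun n1 => rterm A l w1 w2 sg n1 i)).
Proof. reflexivity. Qed.

Lemma hM_is A l w1 w2 sg : (1 <= l)%nat -> Re w1 < 0 ->
  is_series (fun i => hM A l w1 w2 sg (S i))
    (Cmult (cpow (INR l) (Cminus (Cminus (RtoC 1) w1) w2)) (csum (divisors l) (fun n1 => CSeries (rterm A l w1 w2 sg n1)))).
Proof. intros Hl Hu. apply is_series_Cscal_l. apply (is_series_csum (divisors l) (fun n1 i => rterm A l w1 w2 sg n1 i)).
  intros n1 Hn1. apply is_series_C_abs. apply rterm_abs; auto. Qed.

Lemma hM_abs A l w1 w2 sg : (1 <= l)%nat -> Re w1 < 0 -> ex_series (fun i => Cmod (hM A l w1 w2 sg (S i))).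
Proof. intros Hl Hu.
  set (B := Cmod (cpow (INR l) (Cminus (Cminus (RtoC 1) w1) w2)) *
     rsum (divisors l) (fun n1 => Cmod (cpow (INR n1) (Cminus (Cmult (RtoC 2) w2) (RtoC 1))) * Gb A l w2 sg n1)).
  apply (ex_series_le (V := R_CompleteNormedModule) _ (fun i => Rpower (INR (S i)) (Re w1 - 1) * B)).
  - intros i. change (Rabs (Cmod (hM A l w1 w2 sg (S i))) <= Rpower (INR (S i)) (Re w1 - 1) * B).
    rewrite Rabs_pos_eq by apply Cmod_ge_0. rewrite hM_rterm, Cmod_mult. unfold B.
    pose proof (Cmod_ge_0 (cpow (INR l) (Cminus (Cminus (RtoC 1) w1) w2))).
    assert (Cmod (csum (divisors l) (fun n1 => rterm A l w1 w2 sg n1 i)) <=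
      Rpower (INR (S i)) (Re w1 - 1) * rsum (divisors l) (fun n1 => Cmod (cpow (INR n1) (Cminus (Cmult (RtoC 2) w2) (RtoC 1))) * Gb A l w2 sg n1)).
    { eapply Rle_trans. apply Cmod_csum. rewrite Rmult_comm, <- rsum_scal_r. apply rsum_le.
      intros n1 Hn. apply in_divisors in Hn as [Hn1 Hn2].
      assert (Hq : (1 <= l / n1)%nat) by (apply div_ge1; lia).
      unfold rterm. rewrite !Cmod_mult, Cmod_cpow_m1.
      pose proof (G_bound A l w2 sg n1 (S i) Hq).
      pose proof (Rpower_pos (INR (S i)) (Re w1 - 1)). pose proof (Cmod_ge_0 (cpow (INR n1) (Cminus (Cmult (RtoC 2) w2) (RtoC 1)))).
      pose proof (Cmod_ge_0 (G A l w2 sg n1 (Z.of_nat (S i)))).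
      set (r := Rpower (INR (S i)) (Re w1 - 1)) in *. set (cc := Cmod (cpow (INR n1) _)) in *.
      replace (cc * Gb A l w2 sg n1 * r) with ((r * cc) * Gb A l w2 sg n1) by ring.
      apply Rmult_le_compat_l; auto. apply Rmult_le_pos; lra. }
    pose proof (Cmod_ge_0 (csum (divisors l) (fun n1 => rterm A l w1 w2 sg n1 i))). nra.
  - apply ex_series_ext with (fun i => scal B (Rpower (INR (S i)) (Re w1 - 1))).
    intros; unfold scal; simpl; unfold mult; simpl; ring.
    apply (ex_series_scal (V := R_NormedModule)). apply pser. lra. Qed.


Definition xterm (c : nat) (k : Z) (w1 : C) (i : nat) : C :=
  if Z.eqb ((k + Z.of_nat (S i)) mod Z.of_nat c) 0
  then Cmult (cpow (INR c) (Copp w1)) (Cdiv (RtoC (INR c)) (cpow (INR (S i)) (Cminus (RtoC 1) w1)))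
  else RtoC 0.

Lemma Cmod_cpow_1m x w : 0 < x -> Cmod (Cdiv (RtoC 1) (cpow x (Cminus (RtoC 1) w))) = Rpower x (Re w - 1).
Proof. intros Hx. rewrite Cmod_div by apply cpow_nz. rewrite Cmod_1, Cmod_cpow. unfold Rpower.
  unfold Rdiv. rewrite Rmult_1_l, <- exp_Ropp. f_equal. unfold Re, Cminus, Cplus, Copp, RtoC; simpl. ring. Qed.

Lemma Xi_is c k w1 : (1 <= c)%nat -> Re w1 < 0 -> is_series (xterm c k w1) (Xi c k w1).
Proof. intros Hc Hu. unfold Xi.
  set (inner := fun (b j : nat) => Cdiv (e (INR (b * S j) / INR c)) (cpow (INR (S j)) (Cminus (RtoC 1) w1))).
  assert (Hin : forall b, is_series (inner b) (CSeries (inner b))).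
  { intros b. apply is_series_C_abs.
    apply (ex_series_le (V := R_CompleteNormedModule) _ (fun j => Rpower (INR (S j)) (Re w1 - 1))).
    - intros j. change (Rabs (Cmod (inner b j)) <= Rpower (INR (S j)) (Re w1 - 1)).
      rewrite Rabs_pos_eq by apply Cmod_ge_0. unfold inner.
      rewrite <- (Cmod_cpow_1m (INR (S j)) w1) by apply INR_S_pos.
      rewrite !Cmod_div by apply cpow_nz. rewrite Cmod_e, Cmod_1. lra.
    - apply pser. lra. }
  eapply is_series_ext. 2: {
    apply is_series_Cscal_l. apply (is_series_csum (seq 0 c) (fun b j => Cmult (e (IZR (Z.of_nat b * k) / INR c)) (inner b j))).
    intros b _. apply is_series_Cscal_l. apply Hin. }
  intros j. simpl.
  rewrite (csum_ext _ _ (fun b => Cmult (e (IZR (Z.of_nat b * (k + Z.of_nat (S j))) / INR c)) (Cinv (cpow (INR (S j)) (Cminus (RtoC 1) w1))))).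
  2: { intros b _. unfold inner, Cdiv. rewrite Cmult_assoc, e_add. f_equal. f_equal.
       rewrite (INR_IZR_INZ (b * S j)), Nat2Z.inj_mul, Z.mul_add_distr_l, plus_IZR. field. apply INR_pos_nz; auto. }
  rewrite csum_scal_r, ortho by auto. unfold xterm.
  destruct (Z.eqb _ 0). unfold Cdiv. reflexivity. rewrite Cmult_0_l, Cmult_0_r. reflexivity. Qed.

Definition sig12 (s1 s2 : bool) : Z := (- (sgn s1 * sgn s2))%Z.

Definition kf (c L n1 : nat) (w2 : C) : C :=
  Cdiv (cpow (INR n1 ^ 2 / (INR c ^ 3 * INR L)) w2) (RtoC (INR n1)).

Lemma XiF_val A (HA : HeckeMaassCoeffs A) l c w2 s1 s2 d m :
  In c (divisors l) -> (1 <= l)%nat -> Re w2 < 0 ->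
  (Z.of_nat c | sgn s1 * Z.of_nat d + Z.of_nat m)%Z ->
  XiF A c (sgn s2) (Z.of_nat d) (l / c) w2 =
  Cmult (RtoC (INR c)) (csum (divisors l) (fun n1 =>
    Cmult (kf c (l / c) n1 w2) (G A l w2 (sig12 s1 s2) n1 (Z.of_nat ((l / c) * m))))).
Proof. intros Hc Hl Hu [t Ht]. pose proof Hc as Hc'. apply in_divisors in Hc' as [Hc1 Hc2].
  set (L := (l / c)%nat). assert (HcL : (c * L = l)%nat) by (apply div_mul_l; lia).
  assert (HL : (1 <= L)%nat) by (unfold L; apply div_ge1; lia).
  unfold XiF. rewrite HcL. f_equal. apply csum_ext. intros n1 Hn1. pose proof Hn1 as Hn1'.
  apply in_divisors in Hn1' as [Hn11 Hn12].
  set (q := (l / n1)%nat). assert (Hnq : (n1 * q = l)%nat) by (apply div_mul_l; lia).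
  assert (Hq : (1 <= q)%nat) by (unfold q; apply div_ge1; lia).
  rewrite <- (CSeries_scal_l _ _ _ (G_is A HA l w2 (sig12 s1 s2) n1 (Z.of_nat (L * m)) ltac:(lia) Hu)).
  apply CSeries_ext. intros j. cbv zeta. unfold gterm. fold q.
  rewrite (K_move q s1 (Z.of_nat d * Z.of_nat L) (Z.of_nat (L * m)) (sgn s2 * Z.of_nat (S j))); auto.
  2: { replace (sgn s1 * (Z.of_nat d * Z.of_nat L) + Z.of_nat (L * m))%Z
         with (Z.of_nat L * (sgn s1 * Z.of_nat d + Z.of_nat m))%Z by (rewrite Nat2Z.inj_mul; ring).
       rewrite Ht. exists (t * Z.of_nat n1)%Z.
       transitivity (t * (Z.of_nat c * Z.of_nat L))%Z. ring.
       rewrite <- Nat2Z.inj_mul, HcL, <- Hnq, Nat2Z.inj_mul. ring. }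
  replace (- sgn s1 * (sgn s2 * Z.of_nat (S j)))%Z with (sig12 s1 s2 * Z.of_nat (S j))%Z
    by (unfold sig12; ring).
  set (K := Kloosterman _ _ _).
  assert (Hpos : 0 < INR n1 ^ 2 / (INR c ^ 3 * INR L)).
  { pose proof (INR_pos n1 ltac:(lia)). pose proof (INR_pos c ltac:(lia)). pose proof (INR_pos L HL).
    apply Rdiv_lt_0_compat. apply pow_lt; auto. apply Rmult_lt_0_compat; auto. apply pow_lt; auto. }
  replace (INR (S j) * INR n1 ^ 2 / (INR c ^ 3 * INR L)) with (INR (S j) * (INR n1 ^ 2 / (INR c ^ 3 * INR L)))
    by (unfold Rdiv; ring).
  rewrite cpow_mul by (auto; apply INR_S_pos). rewrite cpow_m1 by apply INR_S_pos.
  unfold kf. rewrite RtoC_mult. field.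
  split; apply RtoC_INR_nz; lia. Qed.

Definition XFv A l c w2 s1 s2 m : C :=
  Cmult (RtoC (INR c)) (csum (divisors l) (fun n1 =>
    Cmult (kf c (l / c) n1 w2) (G A l w2 (sig12 s1 s2) n1 (Z.of_nat ((l / c) * m))))).

Lemma sum_d A (HA : HeckeMaassCoeffs A) l c w1 w2 s1 s2 i :
  In c (divisors l) -> (1 <= l)%nat -> Re w2 < 0 ->
  csum (units_mod c) (fun d => Cmult (xterm c (sgn s1 * Z.of_nat d) w1 i) (XiF A c (sgn s2) (Z.of_nat d) (l / c) w2)) =
  if Nat.eqb (Nat.gcd (S i) c) 1 then
    Cmult (Cmult (cpow (INR c) (Copp w1)) (Cdiv (RtoC (INR c)) (cpow (INR (S i)) (Cminus (RtoC 1) w1))))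
          (XFv A l c w2 s1 s2 (S i))
  else RtoC 0.
Proof. intros Hc Hl Hu. pose proof Hc as Hc'. apply in_divisors in Hc' as [Hc1 Hc2].
  unfold units_mod. rewrite csum_filter.
  set (W := if Nat.eqb (Nat.gcd (S i) c) 1 then
    Cmult (Cmult (cpow (INR c) (Copp w1)) (Cdiv (RtoC (INR c)) (cpow (INR (S i)) (Cminus (RtoC 1) w1))))
          (XFv A l c w2 s1 s2 (S i)) else RtoC 0).
  rewrite (csum_ext _ _ (fun d => if Nat.eqb d (d0 s1 c (S i)) then W else RtoC 0)).
  - apply csum_single_nat. apply seq_NoDup. apply in_seq. pose proof (d0_lt s1 c (S i)). lia.
  - intros d Hd. apply in_seq in Hd. unfold xterm.
    rewrite (cond_bool s1 c d (S i)) by lia.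
    destruct (Nat.eqb_spec d (d0 s1 c (S i))) as [E|E].
    + subst d. rewrite d0_gcd by lia. unfold W.
      destruct (Nat.eqb (Nat.gcd (S i) c) 1); [|reflexivity].
      f_equal. unfold XFv. apply XiF_val; auto.
      apply cond_iff. lia. apply d0_lt; lia. apply d0_Z; lia.
    + destruct (Nat.eqb (Nat.gcd d c) 1); [apply Cmult_0_l | reflexivity]. Qed.


Ltac nzs := repeat split; first [apply cpow_nz | apply RtoC_INR_nz; lia | apply not_0_INR; lia | idtac].

Lemma cpow_kf a b Lr w : 0 < a -> 0 < b -> 0 < Lr ->
  cpow (a ^ 2 / (b ^ 3 * Lr)) w =
  Cdiv (Cmult (cpow a w) (cpow a w)) (Cmult (Cmult (Cmult (cpow b w) (cpow b w)) (cpow b w)) (cpow Lr w)).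
Proof. intros Ha Hb HL.
  replace (a ^ 2 / (b ^ 3 * Lr)) with ((a * a) * / (b * (b * b) * Lr)) by (simpl; field; lra).
  assert (0 < b * (b * b) * Lr) by (apply Rmult_lt_0_compat; [apply Rmult_lt_0_compat; [|apply Rmult_lt_0_compat]|]; auto).
  rewrite cpow_mul; [| apply Rmult_lt_0_compat; auto | apply Rinv_0_lt_compat; auto].
  rewrite cpow_mul by auto. rewrite cpow_inv by auto.
  rewrite cpow_mul; [| apply Rmult_lt_0_compat; [|apply Rmult_lt_0_compat]; auto | auto].
  rewrite cpow_mul; [| auto | apply Rmult_lt_0_compat; auto]. rewrite cpow_mul by auto.
  field. repeat split; apply cpow_nz. Qed.

Lemma alg_R (a : C) (K : C) m n1 n2 w1 w2 : (1 <= m)%nat -> (1 <= n1)%nat -> (1 <= n2)%nat ->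
  Cmult (Cdiv a (Cmult (Cmult (cpow (INR m) (Cminus (RtoC 1) w1)) (cpow (INR n2) (Cminus (RtoC 1) w2)))
            (cpow (INR n1) (Cminus (RtoC 1) (Cmult (RtoC 2) w2))))) K =
  Cmult (Cmult (cpow (INR m) (Cminus w1 (RtoC 1))) (cpow (INR n1) (Cminus (Cmult (RtoC 2) w2) (RtoC 1))))
        (Cmult (Cmult a (cpow (INR n2) (Cminus w2 (RtoC 1)))) K).
Proof. intros Hm Hn1 Hn2. assert (P1 := INR_pos m Hm). assert (P2 := INR_pos n1 Hn1). assert (P3 := INR_pos n2 Hn2).
  rewrite (cpow_1m (INR m)), (cpow_1m (INR n2)), (cpow_1m2 (INR n1)), (cpow_m1 (INR m)), (cpow_m1 (INR n2)),
    (cpow_2m1 (INR n1)) by auto.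
  field. nzs. Qed.

Lemma alg_LC A l c w1 w2 s1 s2 m : In c (divisors l) -> (1 <= m)%nat ->
  Cmult (cpow (INR c) (Cminus (Cmult (RtoC 2) w2) (RtoC 1)))
    (Cmult (Cmult (cpow (INR c) (Copp w1)) (Cdiv (RtoC (INR c)) (cpow (INR m) (Cminus (RtoC 1) w1))))
           (XFv A l c w2 s1 s2 m))
  = hM A l w1 w2 (sig12 s1 s2) ((l / c) * m).
Proof. intros Hc Hm. pose proof Hc as Hc'. apply in_divisors in Hc' as [Hc1 Hc2].
  set (L := (l / c)%nat). assert (HcL : (c * L = l)%nat) by (apply div_mul_l; lia).
  assert (HL : (1 <= L)%nat) by (unfold L; apply div_ge1; lia).
  unfold XFv, hM. fold L.
  rewrite <- !csum_scal_l. apply csum_ext. intros n1 Hn1. apply in_divisors in Hn1 as [Hn11 Hn12].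
  assert (Pc := INR_pos c ltac:(lia)). assert (PL := INR_pos L HL). assert (Pm := INR_pos m Hm).
  assert (Pn := INR_pos n1 ltac:(lia)).
  unfold kf. rewrite cpow_kf by auto.
  replace (INR l) with (INR c * INR L) by (rewrite <- mult_INR, HcL; auto).
  rewrite mult_INR.
  rewrite (cpow_1mm (INR c * INR L)) by (apply Rmult_lt_0_compat; auto).
  rewrite !(cpow_mul (INR c) (INR L)) by auto.
  rewrite (cpow_m1 (INR L * INR m)) by (apply Rmult_lt_0_compat; auto).
  rewrite (cpow_mul (INR L) (INR m)) by auto.
  rewrite (cpow_2m1 (INR c)), (cpow_2m1 (INR n1)), (cpow_opp (INR c) w1), (cpow_1m (INR m)) by auto.
  rewrite !RtoC_mult.
  field. nzs. Qed.


Theorem mainTheorem5 (A : nat -> nat -> C) (HA : HeckeMaassCoeffs A)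
  (l : nat) (hl : (1 <= l)%nat) (w1 w2 : C) (hu1 : Re w1 < 0) (hu2 : Re w2 < 0)
  (s1 s2 : bool) :
  csum (divisors l) (fun c =>
    Cmult (cpow (INR c) (Cminus (Cmult (RtoC 2) w2) (RtoC 1)))
      (csum (units_mod c) (fun d =>
         Cmult (Xi c (sgn s1 * Z.of_nat d) w1)
               (XiF A c (sgn s2) (Z.of_nat d) (l / c) w2))))
  =
  Cmult (cpow (INR l) (Cminus (Cminus (RtoC 1) w1) w2))
    (csum (divisors l) (fun n1 =>
       CSeries (fun i => let m := S i in
         CSeries (fun j => let n2 := S j in
           Cmult
             (Cdiv (A n2 n1)
                (Cmult (Cmult (cpow (INR m) (Cminus (RtoC 1) w1))
                              (cpow (INR n2) (Cminus (RtoC 1) w2)))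
                       (cpow (INR n1) (Cminus (RtoC 1) (Cmult (RtoC 2) w2)))))
             (Kloosterman (Z.of_nat m) (- (sgn s1 * sgn s2) * Z.of_nat n2) (l / n1)))))).
Proof.
  set (sg := sig12 s1 s2).
  set (Tot := Cmult (cpow (INR l) (Cminus (Cminus (RtoC 1) w1) w2))
                (csum (divisors l) (fun n1 => CSeries (rterm A l w1 w2 sg n1)))).
  assert (ER : Cmult (cpow (INR l) (Cminus (Cminus (RtoC 1) w1) w2))
    (csum (divisors l) (fun n1 =>
       CSeries (fun i => let m := S i in
         CSeries (fun j => let n2 := S j in
           Cmult
             (Cdiv (A n2 n1)
                (Cmult (Cmult (cpow (INR m) (Cminus (RtoC 1) w1))
                              (cpow (INR n2) (Cminus (RtoC 1) w2)))
                       (cpow (INR n1) (Cminus (RtoC 1) (Cmult (RtoC 2) w2)))))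
             (Kloosterman (Z.of_nat m) (- (sgn s1 * sgn s2) * Z.of_nat n2) (l / n1)))))) = Tot).
  { unfold Tot. f_equal. apply csum_ext. intros n1 Hn1. apply in_divisors in Hn1 as [Hn11 Hn12].
    apply CSeries_ext. intros i. cbv zeta. unfold rterm.
    rewrite <- (CSeries_scal_l _ _ _ (G_is A HA l w2 sg n1 (Z.of_nat (S i)) ltac:(lia) hu2)).
    apply CSeries_ext. intros j. unfold gterm, sg, sig12. apply alg_R; lia. }
  rewrite ER. clear ER.
  set (ac := fun c M => if indc l c M then hM A l w1 w2 sg M else RtoC 0).
  assert (HLc : forall c, In c (divisors l) ->
    is_series (fun i => ac c (S i))
      (Cmult (cpow (INR c) (Cminus (Cmult (RtoC 2) w2) (RtoC 1)))
        (csum (units_mod c) (fun d => Cmult (Xi c (sgn s1 * Z.of_nat d) w1) (XiF A c (sgn s2) (Z.of_nat d) (l / c) w2))))).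
  { intros c Hc. pose proof Hc as Hc'. apply in_divisors in Hc' as [Hc1 Hc2].
    set (L := (l / c)%nat). assert (HL : (1 <= L)%nat) by (unfold L; apply div_ge1; lia).
    set (Lc := Cmult _ _).
    assert (Ha : is_series (fun i => ac c (L * S i)%nat) Lc).
    { eapply is_series_ext. 2: {
        apply is_series_Cscal_l.
        apply (is_series_csum (units_mod c) (fun d i => Cmult (xterm c (sgn s1 * Z.of_nat d) w1 i) (XiF A c (sgn s2) (Z.of_nat d) (l / c) w2))).
        intros d _. apply is_series_Cscal_r. apply Xi_is; auto. lia. }
      intros i. cbv beta. rewrite (sum_d A HA l c w1 w2 s1 s2 i Hc hl hu2).
      unfold ac, indc. fold L. rewrite (Nat.mul_comm L (S i)), Nat.Div0.mod_mul, Nat.div_mul by lia.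
      rewrite Nat.eqb_refl, andb_true_l. destruct (Nat.eqb (Nat.gcd (S i) c) 1).
      - rewrite alg_LC by (auto; lia). fold L. rewrite Nat.mul_comm. reflexivity.
      - apply Cmult_0_r. }
    assert (Hb : is_series (fun i => ac c (S i)) (CSeries (fun i => ac c (S i)))).
    { apply is_series_C_abs.
      apply (ex_series_le (V := R_CompleteNormedModule) _ (fun i => Cmod (hM A l w1 w2 sg (S i)))).
      - intros i. change (Rabs (Cmod (ac c (S i))) <= Cmod (hM A l w1 w2 sg (S i))).
        rewrite Rabs_pos_eq by apply Cmod_ge_0. unfold ac. destruct (indc l c (S i)). lra.
        rewrite Cmod_0. apply Cmod_ge_0.
      - apply hM_abs; auto. }
    assert (Hc3 : is_series (fun i => ac c (L * S i)%nat) (CSeries (fun i => ac c (S i)))).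
    { apply is_series_sparse; auto. intros M HM. unfold ac, indc. fold L.
      apply Nat.eqb_neq in HM. rewrite HM. reflexivity. }
    rewrite (is_series_C_unique _ _ _ Ha Hc3). exact Hb. }
  apply (is_series_C_unique (fun i => hM A l w1 w2 sg (S i))).
  - eapply is_series_ext. 2: { apply (is_series_csum (divisors l) (fun c i => ac c (S i))). exact HLc. }
    intros i. cbv beta. unfold ac.
    rewrite (csum_ext _ _ (fun c => if Nat.eqb c (l / Nat.gcd (S i) l) then hM A l w1 w2 sg (S i) else RtoC 0)).
    apply csum_single_nat. apply divisors_NoDup. apply c0_in; auto.
    intros c Hc. rewrite indc_iff by (auto; lia). reflexivity.
  - unfold Tot. apply hM_is; auto. Qed.
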